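(* Let $A\in\mathbb{R}^{n\times d}_{\geq 0}$ and $b\in\mathbb{R}^n_{\geq 0}$ such that no column of $A$ is the $0$ vector and no entry of $b$ is equal to $0$. Assume that the (classical) system $Ax=b$, $x\in\mathbb{R}^d_{\geq 0}$ satisfies the dominance condition. Let $\tilde A\in\mathbb{T}^{n\times d}$ and $\tilde b\in\mathbb{T}^n$ be such that no column of $\tilde A$ is the $-\infty$ vector and no entry of $\tilde b$ is equal to $-\infty$. If, for each $j$, the minima $\min_i (b_i/A_{ij})$ and $\min_i(\tilde b_i-\tilde A_{ij})$ are reached by the same indices (with the convention $\lambda/0=+\infty$ for $\lambda>0$), then the feasible bases of the classical system are the same as the tropical bases of the tropical system $\tilde A\odot x=\tilde b$, $x\in\mathbb{T}^d$, and both systems are nondegenerate.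
   Context: $\mathbb{T}=\mathbb{R}\cup\{-\infty\}$ is the max-plus semifield ($\oplus=\max$, $\odot=+$). Classical: a basis of $Ax=b$, $x\geq 0$ is $B\subset[d]$ with $A_B$ (columns in $B$) square nonsingular; its basic solution is the unique solution with support in $B$; $B$ is feasible if this solution is nonnegative and nondegenerate if its support equals $B$. Tropical: a tropical (feasible) basis of $\tilde A\odot x=\tilde b$ is $B\subset[d]$, $|B|=n$, with a bijection $\phi:[n]\to B$ such that for each $i$, $\tilde b_i-\tilde A_{i\phi(i)}\in\mathbb{T}$ is minimal among $\tilde b_k-\tilde A_{k\phi(i)}$, $k\in[n]$ (with $-\infty-(-\infty)=+\infty$); it is nondegenerate if each such minimum is real and uniquely attained, and the system is nondegenerate if all its bases are (classically: all feasible bases nondegenerate). Dominance condition: the normalized matrix $(\operatorname{diag} b)^{-1}A(\operatorname{diag} u)^{-1}$, with $u_j$ the largest entry of column $j$ of $(\operatorname{diag} b)^{-1}A$, which has entries in $[0,1]$ and a $1$ in each column, satisfies (a) some $n\times n$ submatrix covers (entrywise dominates) a permutation matrix, and (b) every $n\times n$ submatrix covering a permutation matrix has all row sums less than $2$. *)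

(* Defs.v *)
From HB Require Import structures.
From mathcomp Require Import all_boot all_order all_algebra all_fingroup.
From mathcomp Require Import reals constructive_ereal.
Set Implicit Arguments. Unset Strict Implicit. Unset Printing Implicit Defensive.
Import Order.TTheory GRing.Theory Num.Theory.
Local Open Scope ring_scope.

Section Defs.
Variable R : realType.

(* B is a basis of A x = b: |B| = n and the columns of A in B form a square
   nonsingular matrix (the order of the columns is irrelevant for this). *)
Definition is_basis (n d : nat) (A : 'M[R]_(n, d)) (B : {set 'I_d}) : Prop :=
  exists f : 'I_n -> 'I_d,
    [/\ injective f, f @: setT = B & colsub f A \in unitmx].

Definition supported_solution (n d : nat) (A : 'M[R]_(n, d)) (b : 'cV[R]_n)
    (B : {set 'I_d}) (x : 'cV[R]_d) : Prop :=
  A *m x = b /\ (forall j, j \notin B -> x j 0 = 0).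

(* For a basis B, the basic solution is the unique supported solution. *)
Definition is_basic_solution (n d : nat) (A : 'M[R]_(n, d)) (b : 'cV[R]_n)
    (B : {set 'I_d}) (x : 'cV[R]_d) : Prop :=
  is_basis A B /\ supported_solution A b B x.

Definition feasible_basis (n d : nat) (A : 'M[R]_(n, d)) (b : 'cV[R]_n)
    (B : {set 'I_d}) : Prop :=
  is_basis A B /\
  forall x, is_basic_solution A b B x -> forall j, 0 <= x j 0.

Definition nondegenerate_basis (n d : nat) (A : 'M[R]_(n, d)) (b : 'cV[R]_n)
    (B : {set 'I_d}) : Prop :=
  forall x, is_basic_solution A b B x -> forall j, (x j 0 != 0) = (j \in B).

Definition classical_nondegenerate (n d : nat) (A : 'M[R]_(n, d))
    (b : 'cV[R]_n) : Prop :=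
  forall B, feasible_basis A b B -> nondegenerate_basis A b B.

(* T = R u {-oo}: None stands for -oo *)
Definition tropT := option R.

(* b - a in R u {-oo, +oo}, with the convention -oo - (-oo) = +oo *)
Definition tdiff (b a : tropT) : \bar R :=
  match b, a with
  | Some x, Some y => (x - y)%:E
  | Some _, None => +oo%E
  | None, Some _ => -oo%E
  | None, None => +oo%E
  end.

Definition trop_basis_witness (n d : nat) (At : 'M[tropT]_(n, d))
    (bt : 'cV[tropT]_n) (B : {set 'I_d}) (phi : 'I_n -> 'I_d) : Prop :=
  [/\ injective phi, phi @: setT = B &
      forall i k, (tdiff (bt i 0%R) (At i (phi i)) <= tdiff (bt k 0%R) (At k (phi i)))%E].

Definition trop_basis (n d : nat) (At : 'M[tropT]_(n, d)) (bt : 'cV[tropT]_n)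
    (B : {set 'I_d}) : Prop :=
  #|B| = n /\ exists phi, trop_basis_witness At bt B phi.

Definition trop_nondegenerate_basis (n d : nat) (At : 'M[tropT]_(n, d))
    (bt : 'cV[tropT]_n) (B : {set 'I_d}) : Prop :=
  forall phi, trop_basis_witness At bt B phi ->
  forall i, tdiff (bt i 0%R) (At i (phi i)) \is a fin_num /\
    forall k, k != i ->
      (tdiff (bt i 0%R) (At i (phi i)) < tdiff (bt k 0%R) (At k (phi i)))%E.

Definition tropical_nondegenerate (n d : nat) (At : 'M[tropT]_(n, d))
    (bt : 'cV[tropT]_n) : Prop :=
  forall B, trop_basis At bt B -> trop_nondegenerate_basis At bt B.

Definition col_max (n d : nat) (A : 'M[R]_(n, d)) (b : 'cV[R]_n) (j : 'I_d) : R :=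
  \big[Num.max/0]_(i < n) (A i j / b i 0).

(* (diag b)^-1 A (diag u)^-1 *)
Definition normalized (n d : nat) (A : 'M[R]_(n, d)) (b : 'cV[R]_n) : 'M[R]_(n, d) :=
  \matrix_(i, j) (A i j / (b i 0 * col_max A b j)).

Definition covers_perm (n d : nat) (M : 'M[R]_(n, d)) (f : 'I_n -> 'I_d)
    (s : 'S_n) : Prop :=
  forall i k, (perm_mx s : 'M[R]_n) i k <= colsub f M i k.

Definition dominance (n d : nat) (A : 'M[R]_(n, d)) (b : 'cV[R]_n) : Prop :=
  let M := normalized A b in
  (exists (f : 'I_n -> 'I_d) (s : 'S_n), injective f /\ covers_perm M f s) /\
  (forall (f : 'I_n -> 'I_d) (s : 'S_n), injective f -> covers_perm M f s ->
     forall i, \sum_(k < n) colsub f M i k < 2).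

Definition cratio (b a : R) : \bar R := if a == 0 then +oo%E else (b / a)%:E.

End Defs.

(* Main.v *)
Require Import Defs.
From HB Require Import structures.
From mathcomp Require Import all_boot all_order all_algebra all_fingroup.
From mathcomp Require Import reals constructive_ereal.
From mathcomp Require Import lra.
Import Order.TTheory GRing.Theory Num.Theory.
Local Open Scope ring_scope.
Set Implicit Arguments. Unset Strict Implicit.

Section DD.
Variable R : realFieldType.

Lemma row_split n (N : 'M[R]_n) (z : 'I_n -> R) p :
  N p p = 1 -> \sum_k N p k * z k = z p + \sum_(k | k != p) N p k * z k.
Proof. by move=> Hp; rewrite (bigD1 p) //= Hp mul1r. Qed.

Lemma dd_core n (N : 'M[R]_n) (z : 'I_n -> R) c :
 (forall i, N i i = 1) -> (forall i k, 0 <= N i k) -> (forall i, \sum_k N i k < 2) ->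
 (forall i, \sum_k N i k * z k = c) -> forall i j, (forall k, z i <= z k) -> (forall k, z k <= z j) ->
 exists ri rj, [/\ 0 <= ri < 1, 0 <= rj < 1, c - ri * z j <= z i & z j <= c - rj * z i].
Proof.
move=> Hd Hn Hs Hz i j Hi Hj.
have rlt p : 0 <= \sum_(k | k != p) N p k < 1.
  have := Hs p; rewrite (bigD1 p) //= Hd => H.
  rewrite sumr_ge0 //=; first by rewrite -(ltrD2l 1) (lt_le_trans H) // -[2]/(1+1).
exists (\sum_(k | k != i) N i k), (\sum_(k | k != j) N j k); split => //.
- rewrite -(Hz i) row_split // mulr_suml.
  suff: \sum_(k | k != i) N i k * z k <= \sum_(k | k != i) N i k * z j by lra.
  by apply: ler_sum => k _; rewrite ler_wpM2l.
- rewrite -(Hz j) row_split // mulr_suml.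
  suff: \sum_(k | k != j) N j k * z i <= \sum_(k | k != j) N j k * z k by lra.
  by apply: ler_sum => k _; rewrite ler_wpM2l.
Qed.

Lemma dd_pos n (N : 'M[R]_n) (z : 'I_n -> R) :
 (forall i, N i i = 1) -> (forall i k, 0 <= N i k) -> (forall i, \sum_k N i k < 2) ->
 (forall i, \sum_k N i k * z k = 1) -> forall k, 0 < z k.
Proof.
move=> Hd Hn Hs Hz k0.
pose i := Order.arg_min k0 xpredT z; pose j := Order.arg_max k0 xpredT z.
have Hi : forall k, z i <= z k by rewrite /i; case: arg_minP => // p _ H k; apply: H.
have Hj : forall k, z k <= z j by rewrite /j; case: arg_maxP => // p _ H k; apply: H.
have [ri [rj [/andP[r1 r2] /andP[r3 r4] h1 h2]]] := dd_core Hd Hn Hs Hz Hi Hj.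
apply: (lt_le_trans _ (Hi k0)).
rewrite ltNge; apply/negP => m0.
have : ri * z j <= ri * (1 - rj * z i) by rewrite ler_wpM2l.
have : 0 <= (- z i) * (1 - ri * rj) by rewrite mulr_ge0 // ?oppr_ge0 // subr_ge0; nra.
nra.
Qed.

Lemma dd_ker n (N : 'M[R]_n) (z : 'I_n -> R) :
 (forall i, N i i = 1) -> (forall i k, 0 <= N i k) -> (forall i, \sum_k N i k < 2) ->
 (forall i, \sum_k N i k * z k = 0) -> forall k, z k = 0.
Proof.
move=> Hd Hn Hs Hz k0.
pose i := Order.arg_min k0 xpredT z; pose j := Order.arg_max k0 xpredT z.
have Hi : forall k, z i <= z k by rewrite /i; case: arg_minP => // p _ H k; apply: H.
have Hj : forall k, z k <= z j by rewrite /j; case: arg_maxP => // p _ H k; apply: H.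
have [ri [rj [/andP[r1 r2] /andP[r3 r4] h1 h2]]] := dd_core Hd Hn Hs Hz Hi Hj.
have := Hi k0; have := Hj k0.
have q : 0 < 1 - ri * rj by rewrite subr_gt0; nra.
have : 0 <= z i.
  have : ri * z j <= ri * (- rj * z i) by apply: ler_wpM2l => //; lra.
  move=> e; have : 0 <= z i * (1 - ri * rj) by nra.
  by rewrite pmulr_lge0.
have : z j <= 0.
  have : rj * z i >= rj * (- ri * z j) by apply: ler_wpM2l => //; lra.
  move=> e; have : z j * (1 - ri * rj) <= 0 by nra.
  by rewrite pmulr_lle0.
lra.
Qed.
End DD.

Section Norm.
Variables (R : realType) (n d : nat) (A : 'M[R]_(n, d)) (b : 'cV[R]_n).
Hypotheses (HA : forall i j, 0 <= A i j) (Hb0 : forall i, 0 <= b i 0)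
  (HAc : forall j, exists i, A i j != 0) (Hb : forall i, b i 0 != 0).

Local Notation M := (normalized A b).
Local Notation u := (col_max A b).

Lemma bpos i : 0 < b i 0.
Proof. by rewrite lt_def Hb Hb0. Qed.

Lemma Apos i j : A i j != 0 -> 0 < A i j.
Proof. by move=> h; rewrite lt_def h HA. Qed.

Lemma u_ge j i : A i j / b i 0 <= u j.
Proof. rewrite /col_max. apply: (@le_bigmax _ _ _ 0 (fun i : 'I_n => A i j / b i 0) i). Qed.

Lemma u_arg j : exists i, u j = A i j / b i 0.
Proof.
have [i0 _] := HAc j.
have [i _ e] := @eq_bigmax _ _ _ 0 i0 xpredT (fun i => A i j / b i 0) erefl
  (fun i _ => divr_ge0 (HA i j) (Hb0 i)).
by exists i; exact: e.
Qed.

Lemma u_pos j : 0 < u j.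
Proof.
have [i hi] := HAc j.
apply: lt_le_trans (u_ge j i).
by rewrite divr_gt0 // ?bpos // Apos.
Qed.

Lemma ME i j : M i j = A i j / b i 0 / u j.
Proof. by rewrite /normalized mxE invfM mulrA. Qed.

Lemma AE i j : A i j = b i 0 * (M i j * u j).
Proof.
rewrite ME mulfVK ?gt_eqF ?u_pos //.
by rewrite mulrC mulfVK.
Qed.

Lemma M_ge0 i j : 0 <= M i j.
Proof. by rewrite ME !divr_ge0 // ltW // u_pos. Qed.

Lemma M_le1 i j : M i j <= 1.
Proof. by rewrite ME ler_pdivrMr ?u_pos // mul1r u_ge. Qed.

Lemma M1E i j : (M i j = 1) <-> (A i j / b i 0 = u j).
Proof.
rewrite ME; split => [h|->]; last by rewrite divff // gt_eqF // u_pos.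
exact: divr1_eq.
Qed.

Lemma M_ex1 j : exists i, M i j = 1.
Proof. by have [i hi] := u_arg j; exists i; apply/M1E. Qed.

Lemma P_M1 i j :
  (forall k, (cratio (b i 0%R) (A i j) <= cratio (b k 0%R) (A k j))%E) <-> M i j = 1.
Proof.
rewrite M1E; split => [h|h k].
  have [k0 hk0] := HAc j.
  have hi : A i j != 0.
    apply/negP => /eqP e; move: (h k0); rewrite /cratio e eqxx (negPf hk0).
    by rewrite leye_eq.
  apply/le_anti/andP; split; first exact: u_ge.
  apply: bigmax_le; first by rewrite divr_ge0.
  move=> k _; have [e|nz] := eqVneq (A k j) 0; first by rewrite e mul0r divr_ge0.
  move: (h k); rewrite /cratio (negPf hi) (negPf nz) lee_fin.
  rewrite -(invf_div (A i j)) -(invf_div (A k j)) lef_pV2 //.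
    by rewrite posrE divr_gt0 ?bpos ?Apos.
  by rewrite posrE divr_gt0 ?bpos ?Apos.
have hi : A i j != 0.
  apply/negP => /eqP e; have := u_pos j; by rewrite -h e mul0r ltxx.
rewrite /cratio (negPf hi); have [e|nz] := eqVneq (A k j) 0; first by rewrite leey.
rewrite lee_fin -(invf_div (A i j)) -(invf_div (A k j)) lef_pV2 ?h ?u_ge //.
  by rewrite posrE u_pos.
by rewrite posrE divr_gt0 ?bpos ?Apos.
Qed.


Lemma colsubE' (T : Type) m n' p (B : 'M[T]_(m, n')) (f : 'I_p -> 'I_n') i k :
  colsub f B i k = B i (f k).
Proof. by rewrite mxE. Qed.

Lemma perm_entry (s : 'S_n) i k : (perm_mx s : 'M[R]_n) i k = (s i == k)%:R.
Proof. by rewrite perm_mxEsub !mxE. Qed.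

Lemma sum_two (F : 'I_n -> R) p q : p != q -> (forall k, 0 <= F k) ->
  F p + F q <= \sum_k F k.
Proof.
move=> pq F0; rewrite (bigD1 p) //= (bigD1 q) 1?eq_sym //= addrA lerDl.
by apply: sumr_ge0.
Qed.

Hypothesis Hdom : dominance A b.

Lemma dom_b g : injective g -> (forall i, M i (g i) = 1) ->
  forall i, \sum_k M i (g k) < 2.
Proof.
move=> ginj g1 i; have [_ H] := Hdom.
have := H g (1%g) ginj _ i.
under eq_bigr do rewrite colsubE'.
apply => r k; rewrite perm_entry colsubE' perm1.
by case: eqVneq => [<-|_]; rewrite ?g1 // M_ge0.
Qed.

Lemma sigma_ex : exists s : 'I_n -> 'I_d, injective s /\ forall i, M i (s i) = 1.
Proof.
have [[f [s [finj cov]]] _] := Hdom.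
exists (fun i => f (s i)); split.
  by move=> x y /finj /perm_inj.
move=> i; apply/le_anti; rewrite M_le1 /=.
by have := cov i (s i); rewrite perm_entry eqxx colsubE'.
Qed.

Lemma M1_uniq i i' c : M i c = 1 -> M i' c = 1 -> i = i'.
Proof.
move=> h h'; apply/eqP; apply/negP => /negP ne.
have fin g a : injective g -> (forall r, M r (g r) = 1) -> g a = c -> False.
  move=> ginj g1 gac.
  pose r := if a == i then i' else i.
  have ra : r != a by rewrite /r; case: (a =P i) => [->|/eqP]; rewrite eq_sym.
  have Mr : M r c = 1 by rewrite /r; case: ifP.
  have := dom_b ginj g1 r; rewrite ltNge => /negP; apply.
  have := @sum_two (fun k => M r (g k)) r a ra (fun k => M_ge0 _ _) => /=.
  by rewrite g1 gac Mr.
have [s [sinj s1]] := sigma_ex.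
case: (pickP (fun a => s a == c)) => [a /eqP ea | none].
  exact: (fin s a).
apply: (fin (fun r => if r == i then c else s r) i); last by rewrite eqxx.
  move=> x y /=; case: eqVneq => [->|xi]; case: eqVneq => [->|yi] //.
  - by move=> e; have := none y; rewrite /= -e eqxx.
  - by move=> e; have := none x; rewrite /= e eqxx.
  - exact: sinj.
by move=> r /=; case: eqVneq => [->|_].
Qed.


Definition Cov (B : {set 'I_d}) := exists phi : 'I_n -> 'I_d,
  [/\ injective phi, phi @: setT = B & forall i, M i (phi i) = 1].

Lemma sum_supp (f : 'I_n -> 'I_d) (x : 'cV[R]_d) (F : 'I_d -> R) :
  injective f -> (forall j, j \notin f @: setT -> x j 0 = 0) ->
  \sum_j F j * x j 0 = \sum_k F (f k) * x (f k) 0.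
Proof.
move=> finj supp.
rewrite (bigID (fun j => j \in f @: setT)) /= [X in _ + X]big1 ?addr0; last first.
  by move=> j /supp ->; rewrite mulr0.
rewrite big_imset /=; last by move=> ? ? _ _; apply: finj.
by apply: eq_bigl => k; rewrite in_setT.
Qed.

Lemma Aexp (phi : 'I_n -> 'I_d) (w : 'I_n -> R) i :
  \sum_k A i (phi k) * w k = b i 0 * \sum_k M i (phi k) * (u (phi k) * w k).
Proof. by rewrite mulr_sumr; apply: eq_bigr => k _; rewrite AE !mulrA. Qed.

Lemma cov_feas B : Cov B -> feasible_basis A b B /\ nondegenerate_basis A b B.
Proof.
case=> phi [pinj pB p1].
pose N : 'M[R]_n := \matrix_(i, k) M i (phi k).
have NE i k : N i k = M i (phi k) by rewrite mxE.
have Nd i : N i i = 1 by rewrite NE p1.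
have N0 i k : 0 <= N i k by rewrite NE M_ge0.
have Ns i : \sum_k N i k < 2.
  by under eq_bigr do rewrite NE; apply: dom_b.
have key x : supported_solution A b B x -> forall k, 0 < x (phi k) 0.
  move=> [Ax supp] k.
  have supp' j : j \notin phi @: setT -> x j 0 = 0 by rewrite pB; apply: supp.
  have eq i : \sum_k N i k * (u (phi k) * x (phi k) 0) = 1.
    have := congr1 (fun m : 'cV[R]_n => m i 0) Ax => /=; rewrite mxE (sum_supp _ pinj supp') Aexp.
    move=> e; apply: (mulfI (Hb i)); rewrite mulr1 -[RHS]e.
    by congr (_ * _); apply: eq_bigr => k' _; rewrite NE.
  have := dd_pos Nd N0 Ns eq k.
  by rewrite pmulr_rgt0 // u_pos.
have unit : colsub phi A \in unitmx.
  rewrite unitmxE unitfE -det_tr; apply/negP => /det0P [v v0 vA].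
  move/negP: v0; apply; apply/eqP/rowP => k; rewrite mxE.
  have eq i : \sum_k N i k * (u (phi k) * v 0 k) = 0.
    have := congr1 (fun m : 'rV[R]_n => m 0 i) vA; rewrite !mxE.
    under eq_bigr do rewrite !mxE mulrC.
    rewrite Aexp => /eqP; rewrite mulf_eq0 (negPf (Hb i)) /= => /eqP e; rewrite -[RHS]e.
    by apply: eq_bigr => k' _; rewrite NE.
  have /eqP := dd_ker Nd N0 Ns eq k.
  by rewrite mulf_eq0 gt_eqF ?u_pos //= => /eqP.
have basis : is_basis A B by exists phi; split.
have inB j : j \in B -> exists k, j = phi k.
  by rewrite -pB => /imsetP [k _ ->]; exists k.
split; first split => // x [_ sol] j.
  case: (boolP (j \in B)) => jB.
    by have [k ->] := inB j jB; apply: ltW; apply: key.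
  by case: sol => _ ->.
move=> x [_ sol] j.
case: (boolP (j \in B)) => jB.
  by have [k ->] := inB j jB; rewrite gt_eqF // key.
by case: sol => _ ->; rewrite // eqxx.
Qed.


Lemma feas_cov B : feasible_basis A b B -> Cov B.
Proof.
case=> [[f [finj fB funit]] feas].
pose y := invmx (colsub f A) *m b.
pose x : 'cV[R]_d := \col_j \sum_k (f k == j)%:R * y k 0.
have xf k : x (f k) 0 = y k 0.
  rewrite mxE (bigD1 k) //= eqxx mul1r big1 ?addr0 // => k' kk'.
  by rewrite (inj_eq finj) (negPf kk') mul0r.
have xs j : j \notin f @: setT -> x j 0 = 0.
  move=> jn; rewrite mxE big1 // => k _; case: eqVneq => [e|_]; last by rewrite mul0r.
  by move: jn; rewrite -e imset_f.
have sol : supported_solution A b B x.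
  split; last by rewrite -fB.
  apply/colP => i; rewrite mxE (sum_supp _ finj xs).
  have : (colsub f A *m y) i 0 = b i 0 by rewrite /y mulmxA mulmxV // mul1mx.
  by rewrite mxE => <-; apply: eq_bigr => k _; rewrite xf colsubE'.
have ypos k : 0 <= y k 0.
  by rewrite -xf; apply: (feas x); split => //; exists f; split.
pose z k := u (f k) * y k 0.
have z0 k : 0 <= z k by rewrite mulr_ge0 // ltW // u_pos.
have eqs i : \sum_k M i (f k) * z k = 1.
  case: sol => /(congr1 (fun m : 'cV[R]_n => m i 0)) + _.
  rewrite mxE (sum_supp _ finj xs) Aexp => e.
  apply: (mulfI (Hb i)); rewrite mulr1 -[RHS]e.
  by congr (_ * _); apply: eq_bigr => k _; rewrite xf.
pose g k := odflt k [pick r | M r (f k) == 1].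
have g1 k : M (g k) (f k) = 1.
  rewrite /g; case: pickP => [r /eqP //| none].
  by have [r hr] := M_ex1 (f k); have := none r; rewrite /= hr eqxx.
have ginj : injective g.
  move=> k1 k2 e.
  case: (pickP (fun i0 => [forall k, g k != i0])) => [i0 /forallP hi0 | none]; last first.
    have : forall i, exists k, g k = i.
      move=> i; have := none i => /= /negbT; rewrite negb_forall => /existsP [k].
      by rewrite negbK => /eqP; exists k.
    case/fin_all_exists => h gh.
    have hinj : injective h by apply: (can_inj (g := g)) => i; apply: gh.
    have [h' hh' h'h] := injF_bij hinj.
    have gE w : g w = h' w by rewrite -{1}(h'h w) gh.
    by rewrite -(h'h k1) -(h'h k2) -!gE e.
  exfalso.
  have : forall i, exists c, M i c = 1 /\ forall k, g k = i -> M i0 (f k) <= M i0 c.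
    move=> i; case: (pickP (fun k => g k == i)) => [k0 hk0 | none].
      case: (@arg_maxP _ _ _ k0 (fun k => g k == i) (fun k => M i0 (f k)) hk0).
      move=> km /eqP gkm H; exists (f km); split; first by rewrite -gkm g1.
      by move=> k gk; apply: H; rewrite gk.
    have [s [_ s1]] := sigma_ex.
    exists (s i); split => // k gk.
    by have := none k; rewrite /= gk eqxx.
  case/fin_all_exists => tau htau.
  have tinj : injective tau.
    move=> p q e'; apply: (@M1_uniq p q (tau p)); first by case: (htau p).
    by rewrite e'; case: (htau q).
  have S1 i : \sum_(k | g k == i) z k <= 1.
    rewrite -(eqs i) [X in _ <= X](bigID (fun k => g k == i)) /=.
    have -> : \sum_(k | g k == i) z k = \sum_(k | g k == i) M i (f k) * z k.
      by apply: eq_bigr => k /eqP <-; rewrite g1 mul1r.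
    by rewrite lerDl sumr_ge0 // => k _; rewrite mulr_ge0 // M_ge0.
  have S0 : \sum_(k | g k == i0) z k = 0.
    by rewrite big_pred0 // => k; apply/negbTE.
  have hsum := dom_b tinj (fun i => proj1 (htau i)) i0.
  have : 1 <= \sum_(i | i != i0) M i0 (tau i).
    rewrite -(eqs i0).
    apply: (@le_trans _ _ (\sum_k M i0 (tau (g k)) * z k)).
      apply: ler_sum => k _; apply: ler_wpM2r => //.
      by case: (htau (g k)) => _ ->.
    rewrite (partition_big g xpredT) //=.
    rewrite (bigD1 i0) //= big1 ?add0r; last first.
      by move=> k /eqP gk; have := hi0 k; rewrite gk eqxx.
    apply: ler_sum => i _.
    rewrite (eq_bigr (fun k => M i0 (tau i) * z k)); last by move=> k /eqP ->.
    rewrite -mulr_sumr; apply: ler_piMr; first exact: M_ge0.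
    by rewrite (eq_bigl (fun k => g k == i)) // => k.
  move: hsum; rewrite (bigD1 i0) //=.
  have -> : M i0 (tau i0) = 1 by case: (htau i0).
  move=> h1 h2; suff : (2:R) < 2 by rewrite ltxx. lra.
exists (fun i => f (invF ginj i)); split.
- by move=> p q /finj /(can_inj (f_invF ginj)).
- rewrite -fB; apply/setP => j; apply/imsetP/imsetP => [[i _ ->]|[k _ ->]].
    by exists (invF ginj i).
  by exists (g k) => //; rewrite invF_f.
- by move=> i; have := g1 (invF ginj i); rewrite f_invF.
Qed.

End Norm.

Unset Implicit Arguments.
Set Strict Implicit.

Theorem proposition4p4 (R : realType) (n d : nat)
  (A : 'M[R]_(n, d)) (b : 'cV[R]_n)
  (At : 'M[tropT R]_(n, d)) (bt : 'cV[tropT R]_n) :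
  (forall i j, 0 <= A i j) ->
  (forall i, 0 <= b i 0) ->
  (forall j, exists i, A i j != 0) ->
  (forall i, b i 0 != 0) ->
  dominance A b ->
  (forall j, exists i, At i j != None) ->
  (forall i, bt i 0 != None) ->
  (forall j i,
     (forall k, (cratio (b i 0%R) (A i j) <= cratio (b k 0%R) (A k j))%E) <->
     (forall k, (tdiff (bt i 0%R) (At i j) <= tdiff (bt k 0%R) (At k j))%E)) ->
  [/\ (forall B : {set 'I_d}, feasible_basis A b B <-> trop_basis At bt B),
      classical_nondegenerate A b &
      tropical_nondegenerate At bt].
Proof.
move=> HA Hb0 HAc Hb Hdom HAt Hbt H8.
have Pt i j : (forall k, (tdiff (bt i 0%R) (At i j) <= tdiff (bt k 0%R) (At k j))%E)
    <-> normalized A b i j = 1.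
  exact: (iff_trans (iff_sym (H8 j i)) (P_M1 HA Hb0 HAc Hb i j)).
have trop_iff B : trop_basis At bt B <-> Cov A b B.
  split.
    case=> _ [phi [pinj pB pmin]]; exists phi; split => // i.
    by apply/Pt => k; apply: pmin.
  case=> phi [pinj pB p1]; split.
    by rewrite -pB card_imset // cardsT card_ord.
  by exists phi; split => // i; apply/Pt.
split.
- move=> B; rewrite trop_iff; split; first exact: feas_cov.
  by move=> /(cov_feas HA Hb0 HAc Hb Hdom) [].
- by move=> B /(feas_cov HA Hb0 HAc Hb Hdom) /(cov_feas HA Hb0 HAc Hb Hdom) [].
move=> B _ phi [pinj pB pmin] i; split.
  have [r hr] := HAt (phi i).
  have := pmin i r.
  case: (bt r 0%R) (Hbt r) => [xr|] // _.
  case: (At r (phi i)) hr => [yr|] // _ /=.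
  case: (bt i 0%R) (Hbt i) => [xi|] // _.
  by case: (At i (phi i)).
move=> k ki; rewrite ltNge; apply/negP => hle.
have h1 : normalized A b i (phi i) = 1 by apply/Pt; apply: pmin.
have h2 : normalized A b k (phi i) = 1.
  by apply/Pt => k'; apply: (le_trans hle); apply: pmin.
by move/eqP: ki; apply; apply: (M1_uniq HA Hb0 HAc Hb Hdom h2 h1).
Qed.
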